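(* Let $\mathbb{C}$ be a pointed protomodular category. An object $X$ of $\mathbb{C}$ is strong-complete if and only if $X$ is proto-complete and has trivial center.
   Context: $\mathbb{C}$ is pointed with finite limits; it is protomodular if the split short five lemma holds (for a morphism of split extensions whose kernel and codomain components are isomorphisms, the middle component is an isomorphism). A protosplit monomorphism is a kernel of a split epimorphism. An object $X$ is proto-complete if every protosplit monomorphism with domain $X$ is a split monomorphism, and strong-complete if every protosplit monomorphism with domain $X$ is a split monomorphism with a unique section (retraction). The center of $X$ is the terminal object among morphisms $g:B\to X$ commuting with $1_X$ (i.e. such that some $\varphi:B\times X\to X$ has $\varphi\langle1,0\rangle=g$, $\varphi\langle0,1\rangle=1_X$), with morphisms being maps over $X$; $X$ has trivial center if the center is the zero object. *)

(* Defs.v *)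
Set Implicit Arguments.

Record Category := {
  Ob :> Type;
  Hom : Ob -> Ob -> Type;
  idm : forall A, Hom A A;
  comp : forall A B C, Hom B C -> Hom A B -> Hom A C;
  comp_assoc : forall A B C D (h : Hom C D) (g : Hom B C) (f : Hom A B),
      comp h (comp g f) = comp (comp h g) f;
  comp_id_l : forall A B (f : Hom A B), comp (idm B) f = f;
  comp_id_r : forall A B (f : Hom A B), comp f (idm A) = f
}.

Arguments Hom {c} _ _.
Arguments idm {c} _.
Arguments comp {c A B C} _ _.
Notation "g \o f" := (comp g f) (at level 40, left associativity).

Section Defs.
Variable C : Category.

Definition is_iso {A B : C} (f : Hom A B) : Prop :=
  exists g : Hom B A, g \o f = idm A /\ f \o g = idm B.

Definition is_initial (I : C) : Prop := forall A : C, exists! f : Hom I A, True.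
Definition is_terminal (T : C) : Prop := forall A : C, exists! f : Hom A T, True.
Definition is_zero_obj (Z : C) : Prop := is_initial Z /\ is_terminal Z.

Definition pointed : Prop := exists Z : C, is_zero_obj Z.

Definition is_zero_mor {A B : C} (f : Hom A B) : Prop :=
  exists (Z : C) (a : Hom A Z) (b : Hom Z B), is_zero_obj Z /\ f = b \o a.

Definition is_product (A B P : C) (p1 : Hom P A) (p2 : Hom P B) : Prop :=
  forall (Y : C) (f : Hom Y A) (g : Hom Y B),
    exists! h : Hom Y P, p1 \o h = f /\ p2 \o h = g.

Definition is_pullback {A B D P : C} (f : Hom A D) (g : Hom B D)
    (p1 : Hom P A) (p2 : Hom P B) : Prop :=
  f \o p1 = g \o p2 /\
  forall (Y : C) (u : Hom Y A) (v : Hom Y B), f \o u = g \o v ->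
    exists! h : Hom Y P, p1 \o h = u /\ p2 \o h = v.

Definition has_finite_limits : Prop :=
  (exists T : C, is_terminal T) /\
  (forall (A B D : C) (f : Hom A D) (g : Hom B D),
     exists (P : C) (p1 : Hom P A) (p2 : Hom P B), is_pullback f g p1 p2).

Definition is_kernel {K A B : C} (k : Hom K A) (p : Hom A B) : Prop :=
  is_zero_mor (p \o k) /\
  forall (Y : C) (f : Hom Y A), is_zero_mor (p \o f) ->
    exists! g : Hom Y K, k \o g = f.

Definition split_extension {K A B : C} (k : Hom K A) (p : Hom A B) (s : Hom B A)
  : Prop := p \o s = idm B /\ is_kernel k p.

(* protomodular: split short five lemma *)
Definition protomodular : Prop :=
  forall (K A B K' A' B' : C)
         (k : Hom K A) (p : Hom A B) (s : Hom B A)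
         (k' : Hom K' A') (p' : Hom A' B') (s' : Hom B' A')
         (u : Hom K K') (v : Hom A A') (w : Hom B B'),
    split_extension k p s -> split_extension k' p' s' ->
    v \o k = k' \o u -> p' \o v = w \o p -> v \o s = s' \o w ->
    is_iso u -> is_iso w -> is_iso v.

Definition protosplit_mono {X A : C} (m : Hom X A) : Prop :=
  exists (B : C) (p : Hom A B) (s : Hom B A), p \o s = idm B /\ is_kernel m p.

Definition proto_complete (X : C) : Prop :=
  forall (A : C) (m : Hom X A), protosplit_mono m ->
    exists r : Hom A X, r \o m = idm X.

Definition strong_complete (X : C) : Prop :=
  forall (A : C) (m : Hom X A), protosplit_mono m ->
    exists! r : Hom A X, r \o m = idm X.

Definition commute_mor {B Y X : C} (g : Hom B X) (f : Hom Y X) : Prop :=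
  exists (P : C) (p1 : Hom P B) (p2 : Hom P Y)
         (i1 : Hom B P) (i2 : Hom Y P) (phi : Hom P X),
    is_product B Y P p1 p2 /\
    p1 \o i1 = idm B /\ is_zero_mor (p2 \o i1) /\
    is_zero_mor (p1 \o i2) /\ p2 \o i2 = idm Y /\
    phi \o i1 = g /\ phi \o i2 = f.

(* z : Z -> X is the center of X: terminal among morphisms commuting with 1_X,
   morphisms being maps over X. *)
Definition is_center (X Z : C) (z : Hom Z X) : Prop :=
  commute_mor z (idm X) /\
  forall (B : C) (g : Hom B X), commute_mor g (idm X) ->
    exists! t : Hom B Z, z \o t = g.

Definition trivial_center (X : C) : Prop :=
  exists (Z : C) (z : Hom Z X), is_zero_obj Z /\ is_center X Z z.

End Defs.

Arguments is_iso {C A B} _.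
Arguments is_zero_obj {C} _.
Arguments is_zero_mor {C A B} _.
Arguments is_kernel {C K A B} _ _.
Arguments protosplit_mono {C X A} _.
Arguments proto_complete {C} _.
Arguments strong_complete {C} _.
Arguments commute_mor {C B Y X} _ _.
Arguments is_center {C} _ _ _.
Arguments trivial_center {C} _.

(* Main.v *)
Require Import Defs.

Section H.
Context {C : Category}.

Lemma assoc {A B D E : C} (h : Hom D E) (g : Hom B D) (f : Hom A B) :
  h \o (g \o f) = (h \o g) \o f.
Proof. apply comp_assoc. Qed.

Lemma idl {A B : C} (f : Hom A B) : idm B \o f = f.
Proof. apply comp_id_l. Qed.
Lemma idr {A B : C} (f : Hom A B) : f \o idm A = f.
Proof. apply comp_id_r. Qed.

Lemma zero_obj_mor (Z A B : C) (a : Hom A Z) (b : Hom Z B) :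
  is_zero_obj Z -> is_zero_mor (b \o a).
Proof. intro HZ. exists Z, a, b. auto. Qed.

Lemma zero_comp_r {A B D : C} (f : Hom B D) (h : Hom A B) :
  is_zero_mor f -> is_zero_mor (f \o h).
Proof. intros (Z & a & b & HZ & ->). exists Z, (a \o h), b. split; auto.
  symmetry; apply assoc. Qed.

Lemma initial_unique {Z : C} (HZ : is_initial C Z) B (f g : Hom Z B) : f = g.
Proof. destruct (HZ B) as [x [_ Hx]]. rewrite <- (Hx f I), <- (Hx g I). reflexivity. Qed.

Lemma terminal_unique {Z : C} (HZ : is_terminal C Z) B (f g : Hom B Z) : f = g.
Proof. destruct (HZ B) as [x [_ Hx]]. rewrite <- (Hx f I), <- (Hx g I). reflexivity. Qed.

Lemma zero_unique {A B : C} (f g : Hom A B) :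
  is_zero_mor f -> is_zero_mor g -> f = g.
Proof.
  intros (Z & a & b & [HZi HZt] & ->) (Z' & a' & b' & [HZi' HZt'] & ->).
  destruct (HZi Z') as [c _].
  assert (a' = c \o a) by (apply (terminal_unique HZt')).
  assert (b = b' \o c) by (apply (initial_unique HZi)).
  subst. symmetry. apply assoc.
Qed.

Lemma prod_uniq {A B P : C} {p1 p2} (HP : is_product C A B P p1 p2) {Y}
  (a b : Hom Y P) : p1 \o a = p1 \o b -> p2 \o a = p2 \o b -> a = b.
Proof.
  intros E1 E2. destruct (HP Y (p1 \o a) (p2 \o a)) as [h [_ Hh]].
  rewrite <- (Hh a), <- (Hh b); auto.
Qed.

Lemma kernel_lemma {B X P : C} {p1 p2} (HP : is_product C B X P p1 p2)
  (i2 : Hom X P) : is_zero_mor (p1 \o i2) -> p2 \o i2 = idm X -> is_kernel i2 p1.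
Proof.
  intros Hz Hi. split; auto. intros Y h Hh. exists (p2 \o h). split.
  - apply (prod_uniq HP).
    + rewrite assoc. apply zero_unique; auto. apply zero_comp_r; auto.
    + rewrite assoc, Hi, idl. reflexivity.
  - intros g' Hg'. rewrite <- Hg', assoc, Hi, idl. reflexivity.
Qed.

Lemma product_exists (HL : has_finite_limits C) (A B : C) :
  exists P p1 p2, is_product C A B P p1 p2.
Proof.
  destruct HL as [[T HT] HPB].
  destruct (HT A) as [ta _]. destruct (HT B) as [tb _].
  destruct (HPB A B T ta tb) as (P & p1 & p2 & Hc & Hu).
  exists P, p1, p2. intros Y f g. apply Hu. apply (terminal_unique HT).
Qed.

Lemma equalizer_exists (HL : has_finite_limits C) {A Y : C} (f g : Hom A Y) :
  exists E (e : Hom E A), f \o e = g \o e /\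
    forall W (h : Hom W A), f \o h = g \o h -> exists! k, e \o k = h.
Proof.
  destruct (product_exists HL A Y) as (Q & q1 & q2 & HQ).
  destruct (HQ A (idm A) f) as [hf [[Hf1 Hf2] _]].
  destruct (HQ A (idm A) g) as [hg [[Hg1 Hg2] _]].
  destruct HL as [_ HPB]. destruct (HPB _ _ _ hf hg) as (E & e1 & e2 & Hc & Hu).
  assert (He : e1 = e2).
  { assert (H : q1 \o (hf \o e1) = q1 \o (hg \o e2)) by (rewrite Hc; auto).
    rewrite !assoc, Hf1, Hg1, !idl in H. exact H. }
  exists E, e1. split.
  - assert (H : q2 \o (hf \o e1) = q2 \o (hg \o e2)) by (rewrite Hc; auto).
    rewrite !assoc, Hf2, Hg2 in H. rewrite H, He. reflexivity.
  - intros W h Hh. assert (H : hf \o h = hg \o h).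
    { apply (prod_uniq HQ).
      + rewrite !assoc, Hf1, Hg1. reflexivity.
      + rewrite !assoc, Hf2, Hg2. exact Hh. }
    destruct (Hu W h h H) as [k [[Hk1 Hk2] Hku]]. exists k. split; auto.
    intros k' Hk'. apply Hku. split; auto. rewrite <- He; auto.
Qed.

Lemma joint_epi (HL : has_finite_limits C) (PM : protomodular C)
  {B X P Y : C} {p1 p2} (HP : is_product C B X P p1 p2)
  (i1 : Hom B P) (i2 : Hom X P) :
  p1 \o i1 = idm B -> is_zero_mor (p1 \o i2) -> p2 \o i2 = idm X ->
  forall f g : Hom P Y, f \o i1 = g \o i1 -> f \o i2 = g \o i2 -> f = g.
Proof.
  intros H11 H12 H22 f g E1 E2.
  destruct (equalizer_exists HL f g) as (E & e & He & Hu).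
  destruct (Hu B i1 E1) as [j1 [Hj1 _]].
  destruct (Hu X i2 E2) as [j2 [Hj2 _]].
  assert (Hmono : forall W (a b : Hom W E), e \o a = e \o b -> a = b).
  { intros W a b Hab. destruct (Hu W (e \o a)) as [k [_ Hk]].
    - rewrite !assoc, He; reflexivity.
    - rewrite <- (Hk a), <- (Hk b); auto. }
  pose proof (kernel_lemma HP i2 H12 H22) as Hker.
  assert (Hiso : is_iso e).
  { apply (PM X E B X P B j2 (p1 \o e) j1 i2 p1 i1 (idm X) e (idm B)).
    - split.
      + rewrite <- assoc, Hj1; auto.
      + split.
        * rewrite <- assoc, Hj2; auto.
        * intros W h Hh. destruct Hker as [_ Hk].
          rewrite <- assoc in Hh.
          destruct (Hk W (e \o h) Hh) as [g' [Hg' Hg'u]].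
          exists g'. split.
          -- apply Hmono. rewrite assoc, Hj2. auto.
          -- intros g'' Hg''. apply Hg'u. rewrite <- Hg'', assoc, Hj2. reflexivity.
    - split; auto.
    - rewrite Hj2, idr; reflexivity.
    - rewrite idl; reflexivity.
    - rewrite Hj1, idr; reflexivity.
    - exists (idm X); split; apply idl.
    - exists (idm B); split; apply idl. }
  destruct Hiso as [e' [_ Hee']].
  rewrite <- (idr f), <- (idr g), <- Hee', !assoc, He. reflexivity.
Qed.

End H.

Theorem proposition4p5 (C : Category) :
  pointed C -> has_finite_limits C -> protomodular C ->
  forall X : C, strong_complete X <-> (proto_complete X /\ trivial_center X).
Proof.
  intros [Z0 HZ0] HL PM X. split.
  - intros SC. split.
    + intros A m Hm. destruct (SC A m Hm) as [r [Hr _]]. eauto.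
    + destruct (proj1 HZ0 X) as [z _]. exists Z0, z. split; [exact HZ0|]. split.
      * destruct (proj2 HZ0 X) as [q _].
        exists X, q, (idm X), z, (idm X), (idm X).
        split.
        { intros Y f g. exists g. split.
          - split. apply (terminal_unique (proj2 HZ0)). apply idl.
          - intros h [_ Hh]. rewrite <- Hh, idl. reflexivity. }
        split. apply (terminal_unique (proj2 HZ0)).
        split. rewrite idl. exists Z0, (idm Z0), z. split; auto. rewrite idr; auto.
        split. rewrite idr. exists Z0, q, (idm Z0). split; auto. rewrite idl; auto.
        split. apply idl. split. apply idl. apply idl.
      * intros B g Hg. destruct (proj2 HZ0 B) as [t [_ Ht]]. exists t. split.
        -- destruct Hg as (P & p1 & p2 & i1 & i2 & phi & HP & H11 & H21 & H12 & H22 & Hphi1 & Hphi2).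
           assert (Hps : protosplit_mono i2).
           { exists B, p1, i1. split; auto. apply (kernel_lemma HP); auto. }
           destruct (SC P i2 Hps) as [r [_ Hr]].
           assert (phi = p2) by (rewrite <- (Hr phi Hphi2); apply Hr; auto).
           subst phi. apply zero_unique.
           ++ apply zero_obj_mor; auto.
           ++ rewrite <- Hphi1; auto.
        -- intros t' _. apply (terminal_unique (proj2 HZ0)).
  - intros [PC [Z [z [HZ [Hcomm Hcent]]]]] A m Hm.
    destruct (PC A m Hm) as [r Hr]. exists r. split; auto. intros r' Hr'.
    destruct Hm as (B & p & s & Hps & Hker).
    destruct (product_exists HL B X) as (P & pB & pX & HP).
    destruct (proj1 HZ0 B) as [zB _]. destruct (proj2 HZ0 X) as [aX _].
    destruct (proj1 HZ0 X) as [zX _]. destruct (proj2 HZ0 B) as [aB _].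
    destruct (HP B (idm B) (zX \o aB)) as [iB [[HiB1 HiB2] _]].
    destruct (HP X (zB \o aX) (idm X)) as [iX [[HiX1 HiX2] _]].
    destruct (HP A p r) as [v [[Hv1 Hv2] _]].
    assert (Zbx : is_zero_mor (pB \o iX)) by (rewrite HiX1; apply zero_obj_mor; auto).
    assert (Zxb : is_zero_mor (pX \o iB)) by (rewrite HiB2; apply zero_obj_mor; auto).
    assert (Hker' := kernel_lemma HP iX Zbx HiX2).
    assert (Hvm : v \o m = iX).
    { apply (prod_uniq HP).
      - rewrite assoc, Hv1. apply zero_unique; auto. apply (proj1 Hker).
      - rewrite assoc, Hv2, Hr, HiX2; reflexivity. }
    assert (Hiso : is_iso v).
    { apply (PM X A B X P B m p s iX pB (v \o s) (idm X) v (idm B)).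
      - split; auto.
      - split; auto. rewrite assoc, Hv1; auto.
      - rewrite Hvm, idr; reflexivity.
      - rewrite Hv1, idl; reflexivity.
      - rewrite idr; reflexivity.
      - exists (idm X); split; apply idl.
      - exists (idm B); split; apply idl. }
    destruct Hiso as [t [Htv Hvt]].
    assert (HtiX : t \o iX = m) by (rewrite <- Hvm, assoc, Htv, idl; reflexivity).
    assert (Hc : commute_mor ((r' \o t) \o iB) (idm X)).
    { exists P, pB, pX, iB, iX, (r' \o t).
      split; [exact HP|]. split; [exact HiB1|]. split; [exact Zxb|].
      split; [exact Zbx|]. split; [exact HiX2|]. split; [reflexivity|].
      rewrite <- assoc, HtiX; auto. }
    destruct (Hcent B _ Hc) as [t' [Ht' _]].
    assert (Hcz : is_zero_mor ((r' \o t) \o iB)).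
    { rewrite <- Ht'. exists Z, t', z. auto. }
    assert (Heq : r \o t = r' \o t).
    { apply (joint_epi HL PM HP iB iX HiB1 Zbx HiX2).
      - apply zero_unique; auto. rewrite <- Hv2, <- (assoc pX v t), Hvt, idr. exact Zxb.
      - rewrite <- !assoc, HtiX, Hr, Hr'. reflexivity. }
    rewrite <- (idr r), <- (idr r'), <- Htv, !assoc, Heq. reflexivity.
Qed.
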